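(* Consider a sample path of the CTAS sampling rule (run without stopping). For every $\varepsilon>0$, if there exists $t_0$ such that $\max_a|\hat w^*_a(t)-w^*_a|<\varepsilon$ for all $t\ge t_0$, then there exists $t_\varepsilon\ge t_0$ such that for all $t\ge t_\varepsilon$ and all arms $a$, \[ \left|\frac{\hat c_a(t)N_a(t)}{J(t)}-w^*_a\right|\le3(K-1)\varepsilon. \]
   Context: Setting: $K$ arms; arm $a$ has reward distribution in a one-parameter natural exponential family parametrized by the mean $\mu_a$ and cost distribution of mean $c_a$ supported in $[\ell,1]$, $\ell>0$; the best arm is unique. $N_a(t)$: number of pulls of $a$ up to $t$; $\hat\mu_a(t),\hat c_a(t)$: empirical mean reward and cost; $J(t)=\sum_{k\le t}C_k$ with $C_k$ the cost observed at round $k$. $d$ is the KL divergence within the family. For reward means $\boldsymbol{\mu}'$ with unique best arm and positive cost means $\boldsymbol{c}'$, $\boldsymbol{w}^*(\boldsymbol{\mu}',\boldsymbol{c}')$ is the maximizer over the simplex of $\inf_{\boldsymbol{\lambda}:a^*(\boldsymbol{\lambda})\ne a^*(\boldsymbol{\mu}')}\sum_a\frac{w_a}{c'_a}d(\mu'_a,\lambda_a)$; $\boldsymbol{w}^*=\boldsymbol{w}^*(\boldsymbol{\mu},\boldsymbol{c})$ and $\hat{\boldsymbol{w}}^*(t)=\boldsymbol{w}^*(\hat{\boldsymbol{\mu}}(t),\hat{\boldsymbol{c}}(t))$. CTAS sampling rule: pull each arm once; then at each time $t$, with $\mathcal{U}_t=\{a:N_a(t)<\sqrt t\}$, pull an arm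 in $\arg\min_aN_a(t)$ if $\mathcal{U}_t\neq\emptyset$, and otherwise an arm in $\arg\max_a(J(t)\hat w^*_a(t)-\hat c_a(t)N_a(t))$. *)

(* Defs.v *)
From HB Require Import structures.
From mathcomp Require Import all_boot all_order all_algebra.
From mathcomp Require Import all_classical all_reals.
Set Implicit Arguments. Unset Strict Implicit. Unset Printing Implicit Defensive.
Import Order.TTheory GRing.Theory Num.Theory.
Local Open Scope ring_scope.
Local Open Scope classical_set_scope.

Section CTAS.
Variable R : realType.
Variable K : nat.

Definition unique_best (mu : 'I_K -> R) (a : 'I_K) : Prop :=
  forall b : 'I_K, b != a -> mu b < mu a.

Definition in_simplex (w : 'I_K -> R) : Prop :=
  (forall a, 0 <= w a) /\ \sum_(a < K) w a = 1.

(* Alternative set: mean vectors lam whose best arm differs from a*(mu),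
   where a = a*(mu) is the unique best arm of mu. *)
Definition alt_set (mu : 'I_K -> R) : set ('I_K -> R) :=
  [set lam | exists a, unique_best mu a /\
      exists2 b : 'I_K, b != a & lam a < lam b].

Definition cost_objective (d : R -> R -> R) (mu c w : 'I_K -> R) : R :=
  inf [set (\sum_(a < K) w a / c a * d (mu a) (lam a)) | lam in alt_set mu].

Definition is_opt_weights (d : R -> R -> R) (mu c w : 'I_K -> R) : Prop :=
  in_simplex w /\
  forall w', in_simplex w' -> cost_objective d mu c w' <= cost_objective d mu c w.

(* ---- sample path quantities; round k >= 1 pulls arm A k, observing
   reward X k and cost C k ---- *)

Definition Npulls (A : nat -> 'I_K) (a : 'I_K) (t : nat) : nat :=
  (\sum_(1 <= k < t.+1) (A k == a))%N.

Definition Jcost (C : nat -> R) (t : nat) : R := \sum_(1 <= k < t.+1) C k.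

(* empirical mean of the observations Y of arm a up to time t
   (0 if a has not been pulled yet) *)
Definition emp_mean (A : nat -> 'I_K) (Y : nat -> R) (t : nat) (a : 'I_K) : R :=
  (\sum_(1 <= k < t.+1 | A k == a) Y k) / (Npulls A a t)%:R.

Definition ctas_path (wstar : ('I_K -> R) -> ('I_K -> R) -> 'I_K -> R)
  (A : nat -> 'I_K) (X C : nat -> R) : Prop :=
  (forall i : 'I_K, A i.+1 = i) /\
  (forall t : nat, (K <= t)%N ->
     let N := fun a => Npulls A a t in
     let what := wstar (emp_mean A X t) (emp_mean A C t) in
     let chat := emp_mean A C t in
     ((exists a, (N a)%:R < Num.sqrt (t%:R : R)) ->
        forall b, (N (A t.+1) <= N b)%N) /\
     ((forall a, Num.sqrt (t%:R : R) <= (N a)%:R) ->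
        forall b, Jcost C t * what b - chat b * (N b)%:R
                  <= Jcost C t * what (A t.+1) - chat (A t.+1) * (N (A t.+1))%:R)).

End CTAS.

(* Main.v *)
Require Import Defs.
From HB Require Import structures.
From mathcomp Require Import all_boot all_order all_algebra.
From mathcomp Require Import all_classical all_reals.
From mathcomp Require Import ring lra zify.
Import Order.TTheory GRing.Theory Num.Theory.
Local Open Scope ring_scope.

Definition Ja (R : realType) (K : nat) (A : nat -> 'I_K) (C : nat -> R) (a : 'I_K) (t : nat) : R :=
  \sum_(1 <= k < t.+1 | A k == a) C k.

Arguments Ja {R K}.
Section H.
Variables (R : realType) (K : nat) (A : nat -> 'I_K) (C : nat -> R).

Lemma Ja_S a t : Ja A C a t.+1 = Ja A C a t + (if A t.+1 == a then C t.+1 else 0).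
Proof. by rewrite /Ja big_mkcond big_nat_recr //= -big_mkcond. Qed.

Lemma Npulls_S a t : Npulls A a t.+1 = (Npulls A a t + (A t.+1 == a))%N.
Proof. by rewrite /Npulls big_nat_recr. Qed.

Lemma Jcost_S t : Jcost C t.+1 = Jcost C t + C t.+1.
Proof. by rewrite /Jcost big_nat_recr. Qed.

Lemma Ja0 a : Ja A C a 0 = 0.
Proof. by rewrite /Ja big_geq. Qed.

Lemma Npulls_le a t : (Npulls A a t <= t)%N.
Proof. elim: t => [|t IH]; first by rewrite /Npulls big_geq.
rewrite Npulls_S; case: (A t.+1 == a) => /=; lia. Qed.

Hypothesis hC01 : forall k, (1 <= k)%N -> 0 <= C k <= 1.

Lemma Ja_bounds a t : 0 <= Ja A C a t /\ Ja A C a t <= (Npulls A a t)%:R.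
Proof.
elim: t => [|t [IH1 IH2]]; first by rewrite Ja0 /Npulls big_geq.
rewrite Ja_S Npulls_S natrD; have /andP[c0 c1] := hC01 _ (ltn0Sn t).
case: (A t.+1 == a) => /=; split; lra.
Qed.

Lemma emp_mean_mul a t : emp_mean A C t a * (Npulls A a t)%:R = Ja A C a t.
Proof.
rewrite /emp_mean -/(Ja A C a t).
have [h1 h2] := Ja_bounds a t.
have [e|hn] := eqVneq (Npulls A a t) 0%N.
  rewrite e mulr0; have : Ja A C a t <= 0 by move: h2; rewrite e.
  lra.
by rewrite divfK // pnatr_eq0.
Qed.

Lemma sum_Ja t : \sum_(a < K) Ja A C a t = Jcost C t.
Proof.
elim: t => [|t IH]; first by rewrite /Jcost big_geq // big1 // => a _; rewrite Ja0.
under eq_bigr do rewrite Ja_S. rewrite big_split /= IH Jcost_S; congr (_ + _).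
rewrite (bigD1 (A t.+1)) //= eqxx big1 ?addr0 // => b /negbTE.
by rewrite eq_sym => ->.
Qed.

Lemma Jcost_mono t s : (t <= s)%N -> Jcost C t <= Jcost C s.
Proof.
elim: s => [|s IH]; first by rewrite leqn0 => /eqP->.
rewrite leq_eqVlt => /orP[/eqP->//|/IH h]; rewrite Jcost_S.
have /andP[c0 _] := hC01 _ (ltn0Sn s); lra.
Qed.

Lemma Jcost_ge (l : R) : (forall k, (1 <= k)%N -> l <= C k) -> forall t, l * t%:R <= Jcost C t.
Proof.
move=> hl; elim => [|t IH]; first by rewrite /Jcost big_geq // mulr0.
have := hl t.+1 (ltn0Sn t); rewrite Jcost_S -[in t.+1%:R]addn1 natrD mulrDr mulr1; lra.
Qed.
End H.
Arguments Ja_S {R K A C}. Arguments Jcost_ge {R C l}. Arguments emp_mean_mul {R K A C}.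
Arguments Ja_bounds {R K A C}. Arguments sum_Ja {R K A C}. Arguments Jcost_mono {R C}.
Arguments Npulls_le {K A}. Arguments Npulls_S {K A}. Arguments Jcost_S {R C}.

Lemma fin_lo (R : realFieldType) (u S e J k : R) : u + S = 0 -> S <= 2 * e * J * (k - 1) ->
  0 <= e * J -> 1 <= k -> - (3 * (k - 1) * e * J) <= u.
Proof. move=> h1 h2 h3 h4; have h5 : 0 <= (k - 1) * (e * J) by apply: mulr_ge0; lra. nra. Qed.
Lemma fin_up1 (R : realFieldType) (u S e J : R) : u + S = 0 -> S = 0 -> u <= 3 * (1 - 1) * e * J.
Proof. move=> h1 h2; rewrite subrr mulr0 !mul0r; lra. Qed.
Lemma fin_up2 (R : realFieldType) (u e J k : R) : u <= 2 * e * J -> 0 <= e * J -> 2 <= k -> u <= 3 * (k - 1) * e * J.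
Proof. move=> h1 h2 h3; have h5 : 0 <= (k - 2) * (e * J) by apply: mulr_ge0; lra. nra. Qed.
Arguments fin_lo {R u S e J k}. Arguments fin_up1 {R u S e J}. Arguments fin_up2 {R u e J k}.

Lemma ord_K1 (K : nat) (a b : 'I_K) : K = 1%N -> b = a.
Proof. move=> e; apply: val_inj => /=; move: (ltn_ord a) (ltn_ord b); move: (nat_of_ord a) (nat_of_ord b) => x y; lia. Qed.
Lemma nat_K2 (K : nat) : (0 < K)%N -> K != 1%N -> (2 <= K)%N.
Proof. move=> h1 /eqP h2; lia. Qed.

Theorem lemma5 (R : realType) (K : nat) (l : R) (d : R -> R -> R)
  (mu c : 'I_K -> R)
  (wstar : ('I_K -> R) -> ('I_K -> R) -> 'I_K -> R)
  (A : nat -> 'I_K) (X C : nat -> R)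
  (hl : 0 < l) (hl1 : l <= 1)
  (hc : forall a, l <= c a <= 1)
  (hbest : exists a, unique_best mu a)
  (hwsimp : forall mu' c', in_simplex (wstar mu' c'))
  (hwopt : forall mu' c', (exists a, unique_best mu' a) ->
            (forall a, 0 < c' a) -> is_opt_weights d mu' c' (wstar mu' c'))
  (hC : forall k, (1 <= k)%N -> l <= C k <= 1)
  (hpath : ctas_path wstar A X C)
  (eps : R) (heps : 0 < eps) (t0 : nat)
  (hconv : forall t, (t0 <= t)%N -> forall a,
      `|wstar (emp_mean A X t) (emp_mean A C t) a - wstar mu c a| < eps) :
  exists teps : nat, (t0 <= teps)%N /\
    forall t, (teps <= t)%N -> forall a,
      `|emp_mean A C t a * (Npulls A a t)%:R / Jcost C t - wstar mu c a|
        <= 3 * (K%:R - 1) * eps.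
Proof.
have hC01 : forall k, (1 <= k)%N -> 0 <= C k <= 1.
  move=> k hk; have /andP[h1 h2] := hC k hk; apply/andP; split => //; lra.
have hCl : forall k, (1 <= k)%N -> l <= C k by move=> k /hC /andP[].
case: hbest => a0 _.
have K0 : (0 < K)%N by apply: leq_ltn_trans (ltn_ord a0).
have [hw0 hw1] := hwsimp mu c.
set w := wstar mu c in hw0 hw1 *.
case: hpath => _ hstep.
set T := maxn t0 K.
have hT0 : (t0 <= T)%N by apply: leq_maxl.
have hTK : (K <= T)%N by apply: leq_maxr.
have Jge0 : forall t, 0 <= Jcost C t.
  move=> t; apply: le_trans (Jcost_ge hCl t); apply: mulr_ge0; [lra| exact: ler0n].
have hJw : forall t a, 0 <= Jcost C t * (w a + eps).
  by move=> t a; apply: mulr_ge0; [exact: Jge0 | have := hw0 a; lra].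
have key : forall a t, (T <= t)%N ->
   Ja A C a t <= Ja A C a T + 1 + Jcost C t * (w a + eps) + Num.sqrt (t%:R : R).
  move=> a; elim => [|t IH].
    rewrite leqn0 => /eqP hT; rewrite hT.
    have := hJw 0%N a; have := sqrtr_ge0 (0%:R : R); lra.
  rewrite leq_eqVlt => /orP[/eqP hT|hT].
    rewrite hT; have := hJw t.+1 a; have := sqrtr_ge0 (t.+1%:R : R); lra.
  have hTt : (T <= t)%N by [].
  have IH' := IH hTt.
  have hmono : Jcost C t * (w a + eps) <= Jcost C t.+1 * (w a + eps).
    apply: ler_wpM2r; [have := hw0 a; lra | exact: Jcost_mono].
  have hsq : Num.sqrt (t%:R : R) <= Num.sqrt (t.+1%:R) by rewrite ler_sqrt // ?ler_nat // ler0n.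
  have [hJaT _] := Ja_bounds (A:=A) hC01 a T.
  rewrite Ja_S; case: eqP => hA; last by lra.
  have /andP[_ hC1] := hC01 t.+1 (ltn0Sn t).
  suff: Ja A C a t <= Jcost C t * (w a + eps) + Num.sqrt (t%:R : R).
    have := hJw t a; have := sqrtr_ge0 (t%:R : R); lra.
  have := hstep t (leq_trans hTK hTt); rewrite /= => -[hf ht].
  have [hforced|hnf] := boolP [exists b, (Npulls A b t)%:R < Num.sqrt (t%:R : R)].
  - have [b hb] := existsP hforced.
    have hab := hf (ex_intro _ b hb) b.
    rewrite hA in hab.
    have [_ hJN] := Ja_bounds (A:=A) hC01 a t.
    have : (Npulls A a t)%:R <= (Npulls A b t)%:R :> R by rewrite ler_nat.
    have := hJw t a. lra.
  - have hall : forall b, Num.sqrt (t%:R : R) <= (Npulls A b t)%:R.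
      move=> b; rewrite leNgt; apply/negP => hb; move/negP: hnf; apply; apply/existsP; by exists b.
    have htr := ht hall. rewrite hA in htr.
    set what := wstar (emp_mean A X t) (emp_mean A C t) in htr.
    have hsum : \sum_(b < K) (Jcost C t * what b - emp_mean A C t b * (Npulls A b t)%:R) = 0.
      rewrite big_split /= -mulr_sumr (proj2 (hwsimp _ _)) mulr1 sumrN.
      under eq_bigr do rewrite (emp_mean_mul (A:=A)) //.
      by rewrite sum_Ja subrr.
    have hle : \sum_(b < K) (Jcost C t * what b - emp_mean A C t b * (Npulls A b t)%:R)
       <= \sum_(b < K) (Jcost C t * what a - emp_mean A C t a * (Npulls A a t)%:R).
      by apply: ler_sum => b _; apply: htr.
    rewrite hsum sumr_const card_ord (emp_mean_mul (A:=A)) // in hle.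
    have hx : 0 <= Jcost C t * what a - Ja A C a t.
      by move: hle; rewrite -mulr_natr pmulr_lge0 // ltr0n.
    have := hconv t (leq_trans hT0 hTt) a; rewrite -/w -/what ltr_norml => /andP[_ h2].
    have : Jcost C t * what a <= Jcost C t * (w a + eps).
      by apply: ler_wpM2l => //; lra.
    have := sqrtr_ge0 (t%:R : R); lra.
have hcc : 0 < eps * l / 2 by apply: divr_gt0; [apply: mulr_gt0|].
set cc := eps * l / 2 in hcc *.
set x := (T%:R + 1) / cc + 1 / cc ^+ 2.
have hx1 : 0 <= (T%:R + 1) / cc by apply: divr_ge0; [have := ler0n R T; lra | lra].
have hx2 : 0 <= 1 / cc ^+ 2 by apply: divr_ge0 => //; apply: exprn_ge0; lra.
have x0 : 0 <= x by rewrite /x; lra.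
have hn := archi_boundP x0.
set n := Num.Def.archi_bound x in hn.
exists (maxn T n); split; first by rewrite (leq_trans hT0) // leq_maxl.
move=> t ht a.
have hTt : (T <= t)%N := leq_trans (leq_maxl _ _) ht.
have hnt : (n <= t)%N := leq_trans (leq_maxr _ _) ht.
have hxt : x < t%:R by apply: lt_le_trans hn _; rewrite ler_nat.
have hJl := Jcost_ge hCl t.
have ht1 : 1 <= t%:R :> R by rewrite ler1n; apply: leq_trans K0 (leq_trans hTK hTt).
have hsq : Num.sqrt (t%:R : R) <= cc * t%:R.
  have s0 := sqrtr_ge0 (t%:R : R).
  have ss : Num.sqrt (t%:R : R) ^+ 2 = t%:R by rewrite sqr_sqrtr // ler0n.
  have hct : 1 < cc ^+ 2 * t%:R.
    have : 1 / cc ^+ 2 < t%:R by rewrite /x in hxt; lra.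
    by rewrite ltr_pdivrMr ?exprn_gt0 // mulrC.
  rewrite -ss in hct; rewrite -[X in _ <= cc * X]ss.
  move: (Num.sqrt (t%:R : R)) s0 hct => s s0 hct.
  have y0 : 0 <= cc * s by apply: mulr_ge0 => //; lra.
  have e : cc ^+ 2 * s ^+ 2 = (cc * s) * (cc * s) by rewrite !expr2; ring.
  rewrite e in hct.
  have h1 : 1 <= cc * s.
    move: y0 hct; move: (cc * s) => y y0 hy.
    case: (lerP 1 y) => // hy1.
    have : y * y <= y * 1 by apply: ler_wpM2l => //; lra.
    lra.
  have : s * 1 <= s * (cc * s) by apply: ler_wpM2l.
  rewrite expr2; lra.
have hT1 : T%:R + 1 <= cc * t%:R.
  have : (T%:R + 1) / cc < t%:R by rewrite /x in hxt; lra.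
  by rewrite ltr_pdivrMr // mulrC => /ltW.
have hepsJ : eps * (l * t%:R) <= eps * Jcost C t by apply: ler_wpM2l => //; lra.
have hccd : cc * t%:R = (eps * (l * t%:R)) / 2 by rewrite /cc; field.
have hU : forall b, Ja A C b t - Jcost C t * w b <= 2 * eps * Jcost C t.
  move=> b; have := key b t hTt.
  have [_ hb] := Ja_bounds (A:=A) hC01 b T.
  have : (Npulls A b T)%:R <= T%:R :> R by rewrite ler_nat Npulls_le.
  lra.
have hJ : 0 < Jcost C t.
  apply: lt_le_trans hJl; apply: mulr_gt0 => //; lra.
rewrite (emp_mean_mul (A:=A)) //.
have -> : Ja A C a t / Jcost C t - w a = (Ja A C a t - Jcost C t * w a) / Jcost C t.
  by field; rewrite gt_eqF.
rewrite normrM normfV (gtr0_norm hJ) ler_pdivrMr // ler_norml.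
set U := fun b => Ja A C b t - Jcost C t * w b.
have hsum0 : \sum_(b < K) U b = 0.
  rewrite /U big_split /= sumrN sum_Ja -mulr_sumr hw1 mulr1 subrr //.
rewrite (bigD1 a) //= in hsum0.
have hK1 : 1 <= K%:R :> R by rewrite ler1n.
have hcnt : \sum_(b < K | b != a) (2 * eps * Jcost C t) = (2 * eps * Jcost C t) * (K%:R - 1).
  set k := 2 * eps * Jcost C t.
  have e : \sum_(b < K) k = k + \sum_(b < K | b != a) k.
    by rewrite (bigD1 a).
  rewrite sumr_const card_ord -mulr_natr in e.
  rewrite mulrBr mulr1; lra.
have hrest : \sum_(b < K | b != a) U b <= \sum_(b < K | b != a) (2 * eps * Jcost C t).
  by apply: ler_sum => b _; apply: hU.
have hpos : 0 <= (K%:R - 1) * (eps * Jcost C t).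
  by apply: mulr_ge0; [lra | apply: mulr_ge0; [lra | exact: ltW]].
have hEJ : 0 <= eps * Jcost C t by apply: mulr_ge0; [lra | exact: ltW].
rewrite hcnt in hrest.
apply/andP; split.
  exact: (fin_lo hsum0 hrest hEJ hK1).
have [eK|nK] := eqVneq K 1%N.
  have hS : \sum_(b < K | b != a) U b = 0.
    apply: big1 => b hb; exfalso; move/eqP: hb; apply.
    exact: ord_K1.
  have hK1' : K%:R = 1 :> R by rewrite eK.
  rewrite hK1'; exact: (fin_up1 hsum0 hS).
have hK2 : 2 <= K%:R :> R by rewrite ler_nat; exact: nat_K2 K0 nK.
exact: (fin_up2 (hU a) hEJ hK2).
Qed.
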